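(* Run the algorithm POLAR described in the context with ridge parameter $\lambda\ge 1$, and suppose $\|x_t\|_2\le1$ for all $t$. On the event $$\mathcal{E}:=\bigl\{\,|x_t^\top(\hat\theta_{a,t}-\theta_a^\star)|\le\beta_t\,s_{a,t}\ \text{for all } a\in\mathcal{M},\ t\le T\,\bigr\},$$ we have $$\sum_{t=1}^T\Bigl[\max_{a\in\mathcal{M}}\mu_t(a;C_{\ell(t)})-\mu_t(a_t;C_{\ell(t)})\Bigr]\le 2\beta_T\sqrt{2NdT\log\Bigl(1+\frac{T}{d\lambda}\Bigr)}.$$
   Context: Library $\mathcal{M}=\{1,\dots,N\}$, cache size $K$, contexts $x_t\in\mathbb{R}^d$, unknown $\theta_a^\star\in\mathbb{R}^d$, known penalties $\lambda_a>0$, weight $\alpha>0$, switching cost $\gamma>0$. Playing $a_t$ reveals $q_t(a_t)=\langle\theta_{a_t}^\star,x_t\rangle+\eta_t(a_t)$. A cache $C_\ell$ ($|C_\ell|\le K$) is fixed in epoch $\ell$; $\ell(t)$ is the epoch of round $t$; $\mu_t(a;C):=\langle\theta_a^\star,x_t\rangle-\alpha\lambda_a\mathbf{1}\{a\notin C\}$. Define $V_{a,t}:=\lambda I_d+\sum_{s<t}\mathbf{1}\{a_s=a\}x_sx_s^\top$, $\hat\theta_{a,t}:=V_{a,t}^{-1}\sum_{s<t}\mathbf{1}\{a_s=a\}q_s(a)x_s$, $s_{a,t}:=\sqrt{x_t^\top V_{a,t}^{-1}x_t}$, $\beta_t:=\sigma\sqrt{d\log(1+\tfrac{t}{d\lambda})+2\log\tfrac{N}{\delta}}+\sqrt\lambda$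 (a nondecreasing sequence), and $\mathrm{score}_t(a):=\langle\hat\theta_{a,t},x_t\rangle+\beta_ts_{a,t}-\alpha\lambda_a\mathbf{1}\{a\notin C_{\ell(t)}\}$. Algorithm POLAR: epochs of $H$ rounds; $C_1$ arbitrary with $|C_1|\le K$; at each epoch boundary $\ell>1$ the cache is replaced by the output of a greedy marginal-gain procedure (adding at most $K$ adapters, based on UCB values $\langle\hat\theta_a,x_t\rangle+\beta_t\sqrt{x_t^\top V_a^{-1}x_t}$ on the previous epoch's contexts, penalties $\alpha\lambda_a$ and switching cost $\gamma$); in every round it plays $a_t\in\arg\max_a\mathrm{score}_t(a)$, observes $q_t(a_t)$ and updates $V_{a_t},\hat\theta_{a_t}$. *)

(* Defs.v *)
From HB Require Import structures.
From mathcomp Require Import all_boot all_order all_algebra.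
From mathcomp Require Import reals exp.
Set Implicit Arguments. Unset Strict Implicit. Unset Printing Implicit Defensive.
Import Order.TTheory GRing.Theory Num.Theory.
Local Open Scope ring_scope.

Section POLAR.
Variables (R : realType) (d N : nat).

Definition inner (u v : 'cV[R]_d) : R := (u^T *m v) ord0 ord0.

(* epoch of round t (rounds t = 1,2,...), epochs of H rounds, numbered 1,2,... *)
Definition epoch (H t : nat) : nat := (t.-1 %/ H).+1.

Definition qobs (theta : 'I_N -> 'cV[R]_d) (x : nat -> 'cV[R]_d)
  (eta : nat -> 'I_N -> R) (act : nat -> 'I_N) (s : nat) : R :=
  inner (theta (act s)) (x s) + eta s (act s).

Definition Vmat (lam : R) (x : nat -> 'cV[R]_d) (act : nat -> 'I_N)
  (a : 'I_N) (t : nat) : 'M[R]_d :=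
  lam%:M + \sum_(1 <= s < t | act s == a) (x s *m (x s)^T).

Definition thetahat (lam : R) (theta : 'I_N -> 'cV[R]_d) (x : nat -> 'cV[R]_d)
  (eta : nat -> 'I_N -> R) (act : nat -> 'I_N) (a : 'I_N) (t : nat) : 'cV[R]_d :=
  invmx (Vmat lam x act a t) *m
    \sum_(1 <= s < t | act s == a) (qobs theta x eta act s *: x s).

Definition swidth (lam : R) (x : nat -> 'cV[R]_d) (act : nat -> 'I_N)
  (a : 'I_N) (t : nat) : R :=
  Num.sqrt (((x t)^T *m invmx (Vmat lam x act a t) *m x t) ord0 ord0).

Definition beta (sigma delta lam : R) (t : nat) : R :=
  sigma * Num.sqrt (d%:R * ln (1 + t%:R / (d%:R * lam)) + 2 * ln (N%:R / delta))
  + Num.sqrt lam.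

Definition mu (theta : 'I_N -> 'cV[R]_d) (x : nat -> 'cV[R]_d)
  (alpha : R) (pen : 'I_N -> R) (t : nat) (C : {set 'I_N}) (a : 'I_N) : R :=
  inner (theta a) (x t) - alpha * pen a * (a \notin C)%:R.

Definition score (sigma delta lam : R) (theta : 'I_N -> 'cV[R]_d)
  (x : nat -> 'cV[R]_d) (eta : nat -> 'I_N -> R) (act : nat -> 'I_N)
  (alpha : R) (pen : 'I_N -> R) (C : {set 'I_N}) (t : nat) (a : 'I_N) : R :=
  inner (thetahat lam theta x eta act a t) (x t)
  + beta sigma delta lam t * swidth lam x act a t
  - alpha * pen a * (a \notin C)%:R.

(* max_{a in M} mu_t(a; C); the fold is seeded with mu_t(a0; C) for some
   a0 in M, so it is exactly the maximum over 'I_N. *)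
Definition maxmu (theta : 'I_N -> 'cV[R]_d) (x : nat -> 'cV[R]_d)
  (alpha : R) (pen : 'I_N -> R) (t : nat) (C : {set 'I_N}) (a0 : 'I_N) : R :=
  \big[Num.max/mu theta x alpha pen t C a0]_(b : 'I_N) mu theta x alpha pen t C b.

End POLAR.

(* Main.v *)
Require Import Defs.
From HB Require Import structures.
From mathcomp Require Import all_boot all_order all_algebra.
From mathcomp Require Import reals exp ring lra.
Set Implicit Arguments. Unset Strict Implicit. Unset Printing Implicit Defensive.
Import Order.TTheory GRing.Theory Num.Theory.
Local Open Scope ring_scope.



Lemma det1_rank1 (R : realFieldType) n (w u : 'cV[R]_n) :
  \det (1%:M + w *m u^T) = 1 + (u^T *m w) 0 0.
Proof.
set L : 'M[R]_(n + 1) := block_mx 1%:M 0 u^T 1%:M.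
set M : 'M[R]_(n + 1) := block_mx (1%:M + w *m u^T) w 0 1%:M.
set Rt : 'M[R]_(n + 1) := block_mx 1%:M 0 (- u^T) 1%:M.
have E : L *m M *m Rt = block_mx 1%:M w 0 (1%:M + u^T *m w).
  rewrite /L /M /Rt !mulmx_block !mul1mx !mulmx1 !mul0mx !mulmx0 !addr0 !add0r.
  congr block_mx.
  - by rewrite mulmxN addrK.
  - rewrite mulmxDr mulmx1 mulmxDl mul1mx !mulmxN mulmxA.
    by rewrite [X in _ + X]addrC addrACA !subrr addr0.
  - by rewrite addrC.
have := congr1 determinant E.
rewrite !det_mulmx /L /M /Rt det_lblock det_ublock det_lblock det_ublock !det1.
rewrite !mul1r !mulr1 det_mx11 => ->.
by rewrite mxE mxE eqxx mulr1n.
Qed.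

Lemma det_rank1 (R : realFieldType) n (V : 'M[R]_n) (u : 'cV[R]_n) : V \in unitmx ->
  \det (V + u *m u^T) = \det V * (1 + (u^T *m invmx V *m u) 0 0).
Proof.
move=> hV.
have -> : V + u *m u^T = V *m (1%:M + (invmx V *m u) *m u^T).
  by rewrite mulmxDr mulmx1 mulmxA mulKVmx.
by rewrite det_mulmx det1_rank1 mulmxA.
Qed.

Definition pdq (R : realFieldType) n (A : 'M[R]_n) (c : R) :=
  forall v : 'cV[R]_n, c * (v^T *m v) 0 0 <= (v^T *m A *m v) 0 0.

Lemma quadE (R : realFieldType) n (A : 'M[R]_n) (v : 'cV[R]_n) :
  (v^T *m A *m v) 0 0 = \sum_i \sum_j v i 0 * A i j * v j 0.
Proof.
rewrite mxE; under eq_bigr do rewrite mxE big_distrl /=.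
rewrite exchange_big; apply: eq_bigr => i _; apply: eq_bigr => j _.
by rewrite !mxE.
Qed.

Lemma normE (R : realFieldType) n (v : 'cV[R]_n) : (v^T *m v) 0 0 = \sum_i v i 0 ^+ 2.
Proof. by rewrite mxE; apply: eq_bigr => i _; rewrite !mxE expr2. Qed.

Lemma norm_ge0 (R : realFieldType) n (v : 'cV[R]_n) : 0 <= (v^T *m v) 0 0.
Proof. by rewrite normE sumr_ge0 // => i _; rewrite sqr_ge0. Qed.

Lemma sum_ind (R : realFieldType) n (i : 'I_n) (F : 'I_n -> R) : \sum_j (j == i)%:R * F j = F i.
Proof.
rewrite (bigD1 i) //= big1 ?addr0 => [|j /negbTE ->]; by rewrite ?eqxx ?mul1r ?mul0r.
Qed.

Lemma pdq_diag (R : realFieldType) n (A : 'M[R]_n) c i : pdq A c -> c <= A i i.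
Proof.
move=> /(_ (delta_mx i 0)); rewrite quadE normE.
have dE : forall j, (delta_mx i 0 : 'cV[R]_n) j 0 = (j == i)%:R.
  by move=> j; rewrite mxE andbT.
under eq_bigr do rewrite dE.
under [X in _ <= X]eq_bigr do under eq_bigr do rewrite !dE.
under eq_bigr do rewrite expr2.
rewrite sum_ind eqxx mulr1.
under eq_bigr do under eq_bigr do rewrite mulrC.
under eq_bigr do rewrite sum_ind.
by rewrite sum_ind.
Qed.

Lemma hadamard_step (R : realFieldType) n
  (IH : forall (A : 'M[R]_n) c, 0 < c -> A^T = A -> pdq A c ->
      0 < \det A /\ \det A <= \prod_i A i i)
  (A : 'M[R]_(1 + n)) c : 0 < c -> A^T = A -> pdq A c ->
  0 < \det A /\ \det A <= \prod_(i < n.+1) A i i.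
Proof.
move=> c0 hS hP.
move: hS hP; rewrite -[A](submxK A).
move: (ulsubmx _) (ursubmx _) (dlsubmx _) (drsubmx _) => a cc r D.
rewrite [a]mx11_scalar; move: (a 0 0) => a00 {a} hS hP.
have E0 : (ord0 : 'I_n.+1) = lshift n (0 : 'I_1) by apply: val_inj.
have El : forall i : 'I_n, lift (ord0 : 'I_n.+1) i = rshift 1 i by move=> i; apply: val_inj.
have ha0 : c <= a00.
  by have := pdq_diag (lshift n (0 : 'I_1)) hP; rewrite block_mxEul mxE eqxx mulr1n.
have a0 : 0 < a00 by apply: lt_le_trans ha0.
have a0n : a00 != 0 by rewrite gt_eqF.
rewrite tr_block_mx tr_scalar_mx in hS.
have hD : D^T = D by have := congr1 drsubmx hS; rewrite !block_mxKdr.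
have hc : cc^T = r by have := congr1 dlsubmx hS; rewrite !block_mxKdl.
set S := D - a00^-1 *: (r *m cc).
have Edet : \det (block_mx a00%:M cc r D) = a00 * \det S.
  have E : block_mx 1%:M 0 (-(a00^-1) *: r) 1%:M *m block_mx a00%:M cc r D
         = block_mx a00%:M cc 0 S.
    rewrite mulmx_block !mul1mx !mul0mx !addr0 mul_mx_scalar scalerA.
    by rewrite mulrN mulfV // scaleN1r addNr -scalemxAl scaleNr addrC.
  have := congr1 determinant E.
  by rewrite det_mulmx det_lblock !det1 !mul1r det_ublock det_scalar expr1.
have hSS : S^T = S.
  by rewrite /S linearB linearZ /= trmx_mul hD hc -hc trmxK.
have hSP : pdq S c.
  move=> v.
  pose u : 'cV[R]_1 := -(a00^-1) *: (cc *m v).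
  have := hP (col_mx u v).
  rewrite -mulmxA mul_block_col tr_col_mx !mul_row_col.
  have -> : a00%:M *m u + cc *m v = 0.
    by rewrite mul_scalar_mx /u scalerA mulrN mulfV // scaleN1r addNr.
  have -> : r *m u + D *m v = S *m v.
    by rewrite /u /S -scalemxAr mulmxA scalemxAl mulmxBl scaleNr mulNmx addrC.
  rewrite mulmx0 add0r mulmxA => h; apply: le_trans h.
  rewrite [X in _ <= c * X]mxE ler_pM2l // lerDr.
  exact: norm_ge0.
have [dS1 dS2] := IH S c c0 hSS hSP.
have hdiag : forall i, S i i <= D i i.
  move=> i; rewrite /S !mxE big_ord1 -hc mxE gerBl.
  by rewrite -expr2 mulr_ge0 ?invr_ge0 ?sqr_ge0 ?ltW.
split; first by rewrite Edet mulr_gt0.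
rewrite Edet big_ord_recl E0 block_mxEul mxE eqxx mulr1n ler_pM2l //.
have -> : \prod_(i < n) block_mx a00%:M cc r D (lift ord0 i) (lift ord0 i)
   = \prod_(i < n) D i i.
  apply: eq_bigr => i _.
  have -> : lift ord0 i = rshift 1 i by apply: val_inj.
  by rewrite block_mxEdr.
apply: le_trans dS2 _; apply: ler_prod => i _.
rewrite hdiag andbT; apply: le_trans (ltW c0) _; exact: pdq_diag.
Qed.

Lemma hadamard (R : realFieldType) n (A : 'M[R]_n) c : 0 < c -> A^T = A -> pdq A c ->
  0 < \det A /\ \det A <= \prod_i A i i.
Proof.
elim: n A c => [|n IH] A c.
  by rewrite det_mx00 big_ord0 ltr01 lexx.
exact: (hadamard_step IH).
Qed.

Lemma det_le_tr (R : realFieldType) n (A : 'M[R]_n) c : 0 < c -> A^T = A -> pdq A c ->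
  \det A <= (\tr A / n%:R) ^+ n.
Proof.
move=> c0 hS hP; have [_ h] := hadamard c0 hS hP; apply: le_trans h _.
have H := @leif_AGM R 'I_n predT (fun i => A i i).
have [] := H; first by move=> i _; apply: le_trans (ltW c0) _; exact: pdq_diag.
rewrite cardT size_enum_ord => le _.
by apply: le_trans le.
Qed.

Lemma e_add (R : realFieldType) m n (A B : 'M[R]_(m, n)) i j : (A + B) i j = A i j + B i j.
Proof. by rewrite mxE. Qed.
Lemma e_opp (R : realFieldType) m n (A : 'M[R]_(m, n)) i j : (- A) i j = - A i j.
Proof. by rewrite mxE. Qed.
Lemma e_tr (R : realFieldType) m n (A : 'M[R]_(m, n)) i j : A^T j i = A i j.
Proof. by rewrite mxE. Qed.

Lemma q_bounds (R : realFieldType) n (V : 'M[R]_n) c (x : 'cV[R]_n) : V \in unitmx -> 1 <= c ->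
  pdq V c -> (x^T *m x) 0 0 <= 1 ->
  0 <= (x^T *m invmx V *m x) 0 0 <= 1.
Proof.
move=> hU c1 hP hx.
set y := invmx V *m x.
have hy : V *m y = x by rewrite /y mulKVmx.
have hxy : (x^T *m invmx V *m x) 0 0 = (x^T *m y) 0 0 by rewrite -mulmxA.
clearbody y.
have hq : (x^T *m y) 0 0 = (y^T *m V *m y) 0 0.
  rewrite -{1}hy trmx_mul -(e_tr (y^T *m V *m y)) !trmx_mul trmxK mulmxA.
  by [].
have hyx : (y^T *m x) 0 0 = (x^T *m y) 0 0.
  by rewrite -(e_tr (y^T *m x)) trmx_mul trmxK.
have hyy := hP y.
have yy0 := norm_ge0 y.
have d0 := norm_ge0 (x - y).
have e : (x - y)^T *m (x - y) = x^T *m x - x^T *m y - (y^T *m x - y^T *m y).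
  have -> : (x - y)^T = x^T - y^T by rewrite raddfB.
  by rewrite mulmxBl !mulmxBr.
rewrite e !e_add !e_opp !e_add ?e_opp hyx in d0.
rewrite hxy.
have : c * (y^T *m y) 0 0 >= (y^T *m y) 0 0 by rewrite ler_peMl.
move: hyy d0 yy0 hx c1; rewrite -hq.
move: ((x^T *m y) 0 0) ((y^T *m y) 0 0) ((x^T *m x) 0 0) => Q Y X.
move=> *; apply/andP; split; nra.
Qed.




Lemma e_scale (R : realType) m n (a : R) (A : 'M[R]_(m, n)) i j : (a *: A) i j = a * A i j.
Proof. by rewrite mxE. Qed.

Lemma Vmat_sym (R : realType) d N (lam : R) (x : nat -> 'cV[R]_d) (act : nat -> 'I_N) a t :
  (Vmat lam x act a t)^T = Vmat lam x act a t.
Proof.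
rewrite /Vmat raddfD /= tr_scalar_mx raddf_sum /=; congr (_ + _).
by apply: eq_bigr => s _; rewrite trmx_mul trmxK.
Qed.

Lemma Vmat_pd (R : realType) d N (lam : R) (x : nat -> 'cV[R]_d) (act : nat -> 'I_N) a t :
  0 <= lam -> pdq (Vmat lam x act a t) lam.
Proof.
move=> l0 v; rewrite /Vmat mulmxDr mulmxDl e_add mul_mx_scalar -scalemxAl e_scale lerDl.
rewrite mulmx_sumr mulmx_suml summxE sumr_ge0 // => s _.
have -> : v^T *m (x s *m (x s)^T) *m v = ((x s)^T *m v)^T *m ((x s)^T *m v).
  by rewrite trmx_mul trmxK !mulmxA.
exact: norm_ge0.
Qed.

Lemma Vmat_tr (R : realType) d N (lam : R) (x : nat -> 'cV[R]_d) (act : nat -> 'I_N) a t :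
  \tr (Vmat lam x act a t) = lam *+ d + \sum_(1 <= s < t | act s == a) inner (x s) (x s).
Proof.
rewrite /Vmat mxtraceD mxtrace_scalar raddf_sum /=; congr (_ + _).
by apply: eq_bigr => s _; rewrite mxtrace_mulC trace_mx11.
Qed.

Lemma Vmat_det_pos (R : realType) d N (lam : R) (x : nat -> 'cV[R]_d) (act : nat -> 'I_N) a t :
  0 < lam -> 0 < \det (Vmat lam x act a t).
Proof.
move=> l0.
by case: (hadamard l0 (@Vmat_sym R d N lam x act a t) (@Vmat_pd R d N lam x act a t (ltW l0))).
Qed.

Lemma Vmat_unit (R : realType) d N (lam : R) (x : nat -> 'cV[R]_d) (act : nat -> 'I_N) a t :
  0 < lam -> Vmat lam x act a t \in unitmx.
Proof. by move=> l0; rewrite unitmxE unitfE gt_eqF // Vmat_det_pos. Qed.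

Lemma Vmat_rec (R : realType) d N (lam : R) (x : nat -> 'cV[R]_d) (act : nat -> 'I_N) a t :
  (0 < t)%N -> Vmat lam x act a t.+1 =
  Vmat lam x act a t + (if act t == a then x t *m (x t)^T else 0).
Proof. by move=> t0; rewrite /Vmat big_mkcond big_nat_recr //= -big_mkcond addrA. Qed.

Definition qq (R : realType) d N (lam : R) (x : nat -> 'cV[R]_d) (act : nat -> 'I_N) a t :=
  ((x t)^T *m invmx (Vmat lam x act a t) *m x t) 0 0.

Lemma det_tele (R : realType) d N (lam : R) (x : nat -> 'cV[R]_d) (act : nat -> 'I_N) a t :
  0 < lam -> \det (Vmat lam x act a t.+1) =
  lam ^+ d * \prod_(1 <= s < t.+1 | act s == a) (1 + qq lam x act a s).
Proof.
move=> l0; elim: t => [|t IH].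
  by rewrite /Vmat !big_geq // addr0 det_scalar mulr1.
rewrite Vmat_rec // big_mkcond big_nat_recr //= -big_mkcond.
case: ifP => _.
  by rewrite det_rank1 ?Vmat_unit // IH mulrA.
by rewrite addr0 mulr1 IH.
Qed.

Lemma ln_prod (R : realType) (r : seq nat) (P : pred nat) (F : nat -> R) :
  (forall i, P i -> 0 < F i) ->
  ln (\prod_(i <- r | P i) F i) = \sum_(i <- r | P i) ln (F i).
Proof.
elim: r => [|i r IH] hF; first by rewrite !big_nil ln1.
rewrite !big_cons; case: ifP => Pi; last exact: IH.
rewrite lnM ?IH // posrE; [exact: hF | exact: prodr_gt0].
Qed.

Lemma ln_lb (R : realType) (q : R) : 0 <= q <= 1 -> q <= 2 * ln (1 + q).
Proof.
move=> /andP[q0 q1].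
have p : 0 < 1 + q by lra.
have h : -1 < - (q / (1 + q)).
  rewrite ltrN2 ltr_pdivrMr //; lra.
have := le_ln1Dx h.
have -> : 1 - q / (1 + q) = (1 + q)^-1 by field; lra.
rewrite lnV ?posrE // lerN2 => h2.
apply: le_trans (_ : q <= 2 * (q / (1 + q))) _; last by rewrite ler_wpM2l.
rewrite mulrA ler_pdivlMr //; nra.
Qed.

Lemma arm_bound (R : realType) d N (lam : R) (x : nat -> 'cV[R]_d) (act : nat -> 'I_N) a T :
  (0 < d)%N -> 1 <= lam -> (forall t, inner (x t) (x t) <= 1) ->
  \sum_(1 <= t < T.+1 | act t == a) qq lam x act a t
    <= 2 * (d%:R * ln (1 + T%:R / (d%:R * lam))).
Proof.
move=> d0 lam1 hx.
have l0 : 0 < lam by lra.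
have qB : forall t, 0 <= qq lam x act a t <= 1.
  move=> t; apply: q_bounds lam1 _ (hx t).
    exact: Vmat_unit.
  exact: Vmat_pd (ltW l0).
apply: le_trans (_ : _ <= \sum_(1 <= t < T.+1 | act t == a) 2 * ln (1 + qq lam x act a t)) _.
  by apply: ler_sum => t _; apply: ln_lb.
rewrite -mulr_sumr ler_wpM2l // -ln_prod; last by move=> t _; have := qB t; lra.
set P := \prod_(_ <= _ < _ | _) _.
have P0 : 0 < P by apply: prodr_gt0 => t _; have := qB t; lra.
have dR : 0 < d%:R :> R by rewrite ltr0n.
set u := T%:R / (d%:R * lam).
have u0 : 0 <= u by rewrite /u divr_ge0 // mulr_ge0 // ltW.
have hS : \sum_(1 <= s < T.+1 | act s == a) inner (x s) (x s) <= T%:R.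
  apply: le_trans (_ : _ <= \sum_(1 <= s < T.+1 | act s == a) 1) _.
    by apply: ler_sum => s _; exact: hx.
  rewrite big_mkcond /=; apply: le_trans (_ : _ <= \sum_(1 <= s < T.+1) 1) _.
    by apply: ler_sum => s _; case: ifP => _; rewrite ?ler01 ?lexx.
  by rewrite sumr_const_nat subn1.
have S0 : 0 <= \sum_(1 <= s < T.+1 | act s == a) inner (x s) (x s).
  by apply: sumr_ge0 => s _; rewrite /inner norm_ge0.
have hP : P <= (1 + u) ^+ d.
  have E := @det_tele R d N lam x act a T l0.
  have hdet := det_le_tr l0 (@Vmat_sym R d N lam x act a T.+1) (@Vmat_pd R d N lam x act a T.+1 (ltW l0)).
  rewrite E Vmat_tr in hdet.
  have htr : (lam *+ d + \sum_(1 <= s < T.+1 | act s == a) inner (x s) (x s)) / d%:R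
             <= lam * (1 + u).
    rewrite ler_pdivrMr //.
    have -> : lam * (1 + u) * d%:R = lam *+ d + T%:R.
      by rewrite /u; field; rewrite !gt_eqF.
    by rewrite lerD2l.
  have := le_trans hdet (lerXn2r d _ _ htr).
  rewrite exprMn ler_pM2l ?exprn_gt0 //; apply.
    rewrite nnegrE; apply: divr_ge0; [apply: addr_ge0 => //; apply: mulrn_wge0; exact: ltW | exact: ltW].
  by rewrite nnegrE; apply: mulr_ge0; lra.
rewrite -ler_ln ?posrE ?exprn_gt0 // ?ltr_wpDr // in hP.
by rewrite lnXn ?ltr_wpDr // -mulr_natl in hP.
Qed.

Lemma cs_sum (R : realType) (f : nat -> R) m n :
  (\sum_(m <= i < n) f i) ^+ 2 <= (n - m)%:R * \sum_(m <= i < n) f i ^+ 2.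
Proof.
set S := \sum_(m <= i < n) f i; set Q := \sum_(m <= i < n) f i ^+ 2.
have h : 0 <= \sum_(m <= i < n) \sum_(m <= j < n) (f i - f j) ^+ 2.
  by apply: sumr_ge0 => i _; apply: sumr_ge0 => j _; exact: sqr_ge0.
have ei : forall i, \sum_(m <= j < n) (f i - f j) ^+ 2
    = f i ^+ 2 *+ (n - m) - (f i * S) *+ 2 + Q.
  move=> i; under eq_bigr do rewrite sqrrB.
  by rewrite big_split sumrB sumr_const_nat /= sumrMnl -mulr_sumr.
rewrite (eq_bigr _ (fun i _ => ei i)) in h.
rewrite big_split sumrB /= sumr_const_nat !sumrMnl -mulr_suml -/S -/Q in h.
rewrite -mulr_natl in h; rewrite expr2; lra.
Qed.

Lemma inner_sym (R : realType) d (u v : 'cV[R]_d) : inner u v = inner v u.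
Proof. by rewrite /inner -(e_tr (u^T *m v)) trmx_mul trmxK. Qed.

Lemma inner_subr (R : realType) d (w u v : 'cV[R]_d) : inner w (u - v) = inner w u - inner w v.
Proof. by rewrite /inner mulmxBr e_add e_opp. Qed.

Lemma beta_ge0 (R : realType) d N (sigma delta lam : R) t :
  0 < sigma -> 0 <= beta d N sigma delta lam t.
Proof.
by move=> s0; rewrite /beta addr_ge0 ?sqrtr_ge0 // mulr_ge0 ?sqrtr_ge0 // ltW.
Qed.

Lemma beta_mono (R : realType) d N (sigma delta lam : R) t T :
  0 < sigma -> 0 < lam -> (0 < d)%N -> (t <= T)%N ->
  beta d N sigma delta lam t <= beta d N sigma delta lam T.
Proof.
move=> s0 l0 d0 tT.
have dl : 0 < d%:R * lam by rewrite mulr_gt0 // ltr0n.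
have p : forall k : nat, 0 < 1 + k%:R / (d%:R * lam).
  by move=> k; apply: lt_le_trans ltr01 _; rewrite lerDl divr_ge0 // ltW.
rewrite /beta lerD2r ler_pM2l //; apply: ler_wsqrtr; rewrite lerD2r.
apply: ler_wpM2l; first exact: ler0n.
rewrite ler_ln ?posrE // lerD2l ler_pM2r ?invr_gt0 // ler_nat.
exact: tT.
Qed.

Unset Implicit Arguments.

Theorem lemmaC2 (R : realType) (d N K H T : nat)
  (sigma delta lam alpha : R) (pen : 'I_N -> R)
  (theta : 'I_N -> 'cV[R]_d) (x : nat -> 'cV[R]_d) (eta : nat -> 'I_N -> R)
  (C : nat -> {set 'I_N}) (act : nat -> 'I_N) :
  (0 < d)%N -> (0 < N)%N -> (0 < H)%N ->
  0 < sigma -> 0 < delta < 1 -> 1 <= lam -> 0 < alpha ->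
  (forall a, 0 < pen a) ->
  (forall t, inner (x t) (x t) <= 1) ->
  (forall l, (#|C l| <= K)%N) ->
  (forall t, (1 <= t <= T)%N -> forall b : 'I_N,
     score sigma delta lam theta x eta act alpha pen (C (epoch H t)) t b
     <= score sigma delta lam theta x eta act alpha pen (C (epoch H t)) t (act t)) ->
  (forall (a : 'I_N) t, (1 <= t <= T)%N ->
     `|inner (x t) (thetahat lam theta x eta act a t - theta a)|
       <= beta d N sigma delta lam t * swidth lam x act a t) ->
  \sum_(1 <= t < T.+1)
     (maxmu theta x alpha pen t (C (epoch H t)) (act t)
      - mu theta x alpha pen t (C (epoch H t)) (act t))
  <= 2 * beta d N sigma delta lam T *
     Num.sqrt (2 * N%:R * d%:R * T%:R * ln (1 + T%:R / (d%:R * lam))).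
Proof.
move=> d0 N0 H0 s0 /andP[dl0 dl1] lam1 al0 pen0 hx hK hscore hE.
have l0 : 0 < lam by lra.
set L := ln (1 + T%:R / (d%:R * lam)).
set B := beta d N sigma delta lam T.
have qB : forall a t, 0 <= qq lam x act a t <= 1.
  move=> a t; apply: q_bounds lam1 _ (hx t).
    exact: Vmat_unit.
  exact: Vmat_pd (ltW l0).
have B0 : 0 <= B by apply: beta_ge0.
have per : forall t, (1 <= t < T.+1)%N ->
    maxmu theta x alpha pen t (C (epoch H t)) (act t)
    - mu theta x alpha pen t (C (epoch H t)) (act t)
    <= 2 * B * Num.sqrt (qq lam x act (act t) t).
  move=> t ht; rewrite ltnS in ht.
  set Ct := C (epoch H t).
  set bt := beta d N sigma delta lam t.
  have bt0 : 0 <= bt by apply: beta_ge0.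
  have sw0 : 0 <= swidth lam x act (act t) t by apply: sqrtr_ge0.
  have key : forall b, mu theta x alpha pen t Ct b
      <= mu theta x alpha pen t Ct (act t) + 2 * bt * swidth lam x act (act t) t.
    move=> b; have h1 := hscore t ht b; have e1 := hE b t ht; have e2 := hE (act t) t ht.
    move: h1 e1 e2; rewrite /score /mu !inner_subr ![inner (x t) _]inner_sym -/Ct -/bt.
    rewrite !ler_norml => h1 /andP[e1 e1'] /andP[e2 e2'].
    lra.
  have hmax : maxmu theta x alpha pen t Ct (act t)
      <= mu theta x alpha pen t Ct (act t) + 2 * bt * swidth lam x act (act t) t.
    rewrite /maxmu; apply: (big_ind (fun z => z <= _)).
    - exact: key.
    - by move=> u v hu hv; rewrite ge_max hu hv.
    - by move=> b _; exact: key.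
  have hbt : bt <= B by apply: beta_mono => //; case/andP: ht.
  rewrite lerBlDl; apply: le_trans hmax _; rewrite lerD2l.
  rewrite -!mulrA ler_pM2l // ler_wpM2r //.
apply: le_trans (ler_sum_nat per) _.
rewrite -mulr_sumr ler_wpM2l ?mulr_ge0 //.
have cs := cs_sum (fun t => Num.sqrt (qq lam x act (act t) t)) 1 T.+1.
rewrite subn1 /= in cs.
have e : \sum_(1 <= i < T.+1) Num.sqrt (qq lam x act (act i) i) ^+ 2
    = \sum_(1 <= i < T.+1) qq lam x act (act i) i.
  by apply: eq_bigr => t _; rewrite sqr_sqrtr // (andP (qB _ _)).1.
rewrite e in cs.
have hq : \sum_(1 <= t < T.+1) qq lam x act (act t) t <= N%:R * (2 * (d%:R * L)).
  have -> : \sum_(1 <= t < T.+1) qq lam x act (act t) t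
      = \sum_(a < N) \sum_(1 <= t < T.+1 | act t == a) qq lam x act a t.
    under [RHS]eq_bigr do rewrite big_mkcond.
    rewrite exchange_big /=; apply: eq_bigr => t _.
    rewrite -big_mkcond /= (big_pred1 (act t)) // => a /=.
  apply: le_trans (_ : _ <= \sum_(a < N) 2 * (d%:R * L)) _.
    by apply: ler_sum => a _; exact: arm_bound.
  by rewrite sumr_const card_ord [X in _ <= X]mulr_natl.
have S0 : 0 <= \sum_(1 <= t < T.+1) Num.sqrt (qq lam x act (act t) t).
  by apply: sumr_ge0 => t _; exact: sqrtr_ge0.
rewrite -(ger0_norm S0) -sqrtr_sqr.
apply: le_trans (ler_wsqrtr cs) _; apply: ler_wsqrtr.
have -> : 2 * N%:R * d%:R * T%:R * L = T%:R * (N%:R * (2 * (d%:R * L))) by ring.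
by rewrite ler_wpM2l.
Qed.
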